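(* In an operational probabilistic theory, let $\mathrm{A},\mathrm{B}$ be systems with $\mathsf{Transf}_{\mathbb{R}}(\mathrm{A}\to\mathrm{B})$ finite-dimensional. Then there exist an integer $N\ge1$, systems $\mathrm{E}_1,\dots,\mathrm{E}_N$ and states $\rho_i\in\mathsf{St}(\mathrm{A}\otimes\mathrm{E}_i)$, $i=1,\dots,N$, such that $(\rho_1,\dots,\rho_N)$ is tomographically faithful for $\mathsf{Transf}(\mathrm{A}\to\mathrm{B})$.
   Context: Operational probabilistic theory: systems closed under $\otimes$; sets $\mathsf{Transf}(\mathrm{A}\to\mathrm{B})$ closed under $\circ$ and $\otimes$; states $\mathsf{St}(\mathrm{A})$ spanning a real vector space $\mathsf{St}_{\mathbb{R}}(\mathrm{A})$; transformations identified when they give equal probabilities in all circuits. A transformation $\mathcal{T}$ is identified with the family of linear maps $\widehat{\mathcal{T}\otimes\mathcal{I}_{\mathrm{E}}}:\mathsf{St}_{\mathbb{R}}(\mathrm{A}\otimes\mathrm{E})\to\mathsf{St}_{\mathbb{R}}(\mathrm{B}\otimes\mathrm{E})$ over all systems $\mathrm{E}$, and $\mathsf{Transf}_{\mathbb{R}}(\mathrm{A}\to\mathrm{B})$ is the real vector space spanned by transformations in this representation (no local tomography is assumed). A tuple $(\rho_1,\dots,\rho_N)$ with $\rho_i\in\mathsf{St}(\mathrm{A}\otimes\mathrm{E}_i)$ is tomographically faithful for $\mathsf{Transf}(\mathrm{A}\to\mathrm{B})$ if for all $\mathcal{T},\mathcal{T}'\in\mathsf{Transf}(\mathrm{A}\to\mathrm{B})$,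 $(\mathcal{T}'\otimes\mathcal{I}_{\mathrm{E}_i})(\rho_i)=(\mathcal{T}\otimes\mathcal{I}_{\mathrm{E}_i})(\rho_i)$ for all $i$ implies $\mathcal{T}'=\mathcal{T}$. *)

(* Defs.v *)
From HB Require Import structures.
From mathcomp Require Import all_boot all_order all_algebra.
From mathcomp Require Import reals.
Set Implicit Arguments. Unset Strict Implicit. Unset Printing Implicit Defensive.
Import Order.TTheory GRing.Theory Num.Theory.
Local Open Scope ring_scope.

(* An operational probabilistic theory, in the linear representation used by
   the paper: each system A has a real vector space St_R(A) spanned by its
   states St(A) (assumed nonempty), systems are closed under tensor, and a
   transformation A -> B is identified with the family of linear maps
   (T (x) I_E)^ : St_R(A (x) E) -> St_R(B (x) E), indexed by all systems E. *)
Record OPT (R : realType) := MkOPT {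
  Sys : Type;
  tens : Sys -> Sys -> Sys;
  StR : Sys -> lmodType R;
  St : forall A : Sys, StR A -> Prop;
  St_spans : forall (A : Sys) (v : StR A),
    exists (n : nat) (c : 'I_n -> R) (s : 'I_n -> StR A),
      (forall i, @St A (s i)) /\ v = \sum_(i < n) c i *: s i;
  St_nonempty : forall A : Sys, exists rho : StR A, @St A rho;
  Transf : forall A B : Sys,
    (forall E : Sys, StR (tens A E) -> StR (tens B E)) -> Prop;
  Transf_linear : forall (A B : Sys) T, @Transf A B T ->
    forall (E : Sys) (a : R) (u v : StR (tens A E)),
      T E (a *: u + v) = a *: T E u + T E v
}.

Arguments Sys {R}.
Arguments tens {R}.
Arguments StR {R}.
Arguments St {R} _ {A}.
Arguments Transf {R} _ A B.

Section Defs.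
Variables (R : realType) (O : OPT R).

Definition family (A B : Sys O) :=
  forall E : Sys O, StR O (tens O A E) -> StR O (tens O B E).

Definition lincomb (A B : Sys O) (n : nat) (c : 'I_n -> R)
  (f : 'I_n -> family A B) : family A B :=
  fun E v => \sum_(i < n) c i *: f i E v.

Definition TransfR (A B : Sys O) (F : family A B) : Prop :=
  exists (n : nat) (c : 'I_n -> R) (T : 'I_n -> family A B),
    (forall i, Transf O A B (T i)) /\ F = lincomb c T.

Definition TransfR_finite_dim (A B : Sys O) : Prop :=
  exists (d : nat) (g : 'I_d -> family A B),
    (forall j, TransfR (g j)) /\
    forall F, TransfR F -> exists c : 'I_d -> R, F = lincomb c g.

Definition tomographically_faithful (A B : Sys O) (N : nat)
  (E : 'I_N -> Sys O) (rho : forall i, StR O (tens O A (E i))) : Prop :=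
  forall T T' : family A B, Transf O A B T -> Transf O A B T' ->
    (forall i, T' (E i) (rho i) = T (E i) (rho i)) -> T' = T.

End Defs.

(* Main.v *)
Require Import Defs.
From mathcomp Require Import all_boot all_order all_algebra.
From mathcomp Require Import reals.
From Stdlib Require Import FunctionalExtensionality Classical.
From Stdlib Require List.
Set Implicit Arguments. Unset Strict Implicit. Unset Printing Implicit Defensive.
Import Order.TTheory GRing.Theory Num.Theory.
Local Open Scope ring_scope.

Definition linf (R : realType) (U V : lmodType R) (f : U -> V) :=
  forall a u v, f (a *: u + v) = a *: f u + f v.

Lemma linf0 (R : realType) (U V : lmodType R) (f : U -> V) : linf f -> f 0 = 0.
Proof.
move=> H; have := H 1 0 0; rewrite scaler0 add0r scale1r => h.
by apply: (@addrI _ (f 0)); rewrite addr0 -h.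
Qed.

Lemma linf_sum (R : realType) (U V : lmodType R) (f : U -> V) n
  (c : 'I_n -> R) (s : 'I_n -> U) :
  linf f -> f (\sum_(i < n) c i *: s i) = \sum_(i < n) c i *: f (s i).
Proof.
move=> H; elim: n c s => [|n IH] c s; first by rewrite !big_ord0 linf0.
by rewrite !big_ord_recl H IH.
Qed.

Lemma linf_lincomb (R : realType) (O : OPT R) (A B : Sys O) n (c : 'I_n -> R)
  (f : 'I_n -> Defs.family A B) E :
  (forall i, linf (f i E)) -> linf (lincomb c f (E:=E)).
Proof.
move=> H a u v; rewrite /lincomb scaler_sumr -big_split /=.
apply: eq_bigr => i _; rewrite H scalerDr !scalerA mulrC //.
Qed.

Lemma TransfR_lin (R : realType) (O : OPT R) (A B : Sys O) (F : Defs.family A B) E :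
  TransfR F -> linf (F E).
Proof.
move=> [n [c [T [HT ->]]]]; apply: linf_lincomb => i a u v.
exact: Transf_linear (HT i) E a u v.
Qed.

Definition wit (R : realType) (O : OPT R) (A : Sys O) :=
  {E : Sys O & {rho : StR O (tens O A E) | St O rho}}.


Definition ev (R : realType) (O : OPT R) (A B : Sys O) d (g : 'I_d -> Defs.family A B)
  (w : wit A) (c : 'rV[R]_d) : StR O (tens O B (projT1 w)) :=
  lincomb (fun j => c 0 j) g (E:=projT1 w) (proj1_sig (projT2 w)).

Definition Sset (R : realType) (O : OPT R) (A B : Sys O) d (g : 'I_d -> Defs.family A B)
  (ws : list (wit A)) (c : 'rV[R]_d) : Prop :=
  forall w, List.In w ws -> ev g w c = 0.

Definition Zset (R : realType) (O : OPT R) (A B : Sys O) d (g : 'I_d -> Defs.family A B)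
  (c : 'rV[R]_d) : Prop :=
  forall E v, lincomb (fun j => c 0 j) g (E:=E) v = 0.

Lemma ev_mul (R : realType) (O : OPT R) (A B : Sys O) d (g : 'I_d -> Defs.family A B)
  w m (u : 'rV[R]_m) (M : 'M[R]_(m, d)) :
  ev g w (u *m M) = \sum_(i < m) u 0 i *: ev g w (row i M).
Proof.
rewrite /ev /lincomb.
under [RHS]eq_bigr => i _ do rewrite scaler_sumr.
rewrite exchange_big /=; apply: eq_bigr => j _.
rewrite !mxE scaler_suml; apply: eq_bigr => i _.
by rewrite !mxE scalerA.
Qed.

Lemma grow (R : realType) (O : OPT R) (A B : Sys O) d (g : 'I_d -> Defs.family A B)
  (Hg : forall j, TransfR (g j)) ws :
  ~ (forall c, Sset g ws c -> Zset g c) ->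
  exists w : wit A, forall m (M : 'M[R]_(m, d)),
    (forall i, Sset g (w :: ws) (row i M)) ->
    exists c : 'rV[R]_d, (forall i, Sset g ws (row i (col_mx M c))) /\
       (\rank M < \rank (col_mx M c))%N.
Proof.
move=> H.
have [c [Hc HZ]] : exists c, Sset g ws c /\ ~ Zset g c.
  apply: NNPP => H1; apply: H => c Hc; apply: NNPP => H2; apply: H1; by exists c.
have [E [v Hv]] : exists E v, lincomb (fun j => c 0 j) g (E:=E) v <> 0.
  apply: NNPP => H1; apply: HZ => E v; apply: NNPP => H2; apply: H1; by exists E, v.
have Hlin : linf (lincomb (fun j => c 0 j) g (E:=E)).
  by apply: linf_lincomb => j; apply: TransfR_lin.
have [n [a [s [Hs Hvs]]]] := St_spans v.
have [i Hi] : exists i, lincomb (fun j => c 0 j) g (E:=E) (s i) <> 0.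
  apply: NNPP => H1; apply: Hv; rewrite Hvs linf_sum //.
  apply: big1 => i _.
  have -> : lincomb (fun j => c 0 j) g (E:=E) (s i) = 0.
    by apply: NNPP => H2; apply: H1; exists i.
  by rewrite scaler0.
exists (existT _ E (exist _ (s i) (Hs i))) => m M HM.
exists c; split.
  move=> k w Hw; rewrite -(splitK k); case: (split k) => j /=.
    by rewrite rowKu; apply: HM; right.
  by rewrite rowKd row_id; apply: Hc.
have -> : \rank (col_mx M c) = \rank (M + c)%MS by rewrite addsmxE.
have := mxrank_leqif_sup (addsmxSl M c).
move=> [Hle Heq]; rewrite ltn_neqAle Hle andbT Heq addsmx_sub submx_refl /=.
apply/negP => /submxP [u Hu].
apply: Hi.
have := ev_mul g (existT _ E (exist _ (s i) (Hs i))) u M.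
rewrite -Hu /ev /= => ->.
apply: big1 => k _.
have := HM k (existT _ E (exist _ (s i) (Hs i))) (or_introl erefl).
by rewrite /ev /= => ->; rewrite scaler0.
Qed.

Lemma step (R : realType) (O : OPT R) (A B : Sys O) d (g : 'I_d -> Defs.family A B)
  (Hg : forall j, TransfR (g j)) n : forall ws, (0 < size ws)%N ->
  (forall m (M : 'M[R]_(m, d)), (forall i, Sset g ws (row i M)) -> (\rank M <= n)%N) ->
  exists ws', (0 < size ws')%N /\ forall c, Sset g ws' c -> Zset g c.
Proof.
elim: n => [|n IH] ws Hsz Hb.
  case: (classic (forall c, Sset g ws c -> Zset g c)) => H; first by exists ws.
  have [w Hw] := grow Hg H.
  have [c [Hc Hr]] := Hw 0%N (0 : 'M[R]_(0, d)) (fun i => match i with Ordinal _ h => False_ind _ (notF h) end).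
  by have := Hb _ _ Hc; rewrite leqn0 => /eqP E0; rewrite E0 in Hr.
case: (classic (forall c, Sset g ws c -> Zset g c)) => H; first by exists ws.
have [w Hw] := grow Hg H.
apply: (IH (w :: ws)) => // m M HM.
have [c [Hc Hr]] := Hw m M HM.
by rewrite -ltnS; exact: leq_trans Hr (Hb _ _ Hc).
Qed.

Lemma In_nth_seq T (x0 : T) s w : List.In w s -> exists i, (i < size s)%N /\ nth x0 s i = w.
Proof.
elim: s => [|x s IH] //= [->|/IH [i [Hi Hn]]]; first by exists 0%N.
by exists i.+1.
Qed.

Theorem mainTheorem8 (R : realType) (O : OPT R) (A B : Sys O) :
  @TransfR_finite_dim R O A B ->
  exists (N : nat) (E : 'I_N -> Sys O)
         (rho : forall i : 'I_N, StR O (tens O A (E i))),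
    (0 < N)%N /\ (forall i, St O (rho i)) /\
    @tomographically_faithful R O A B N E rho.
Proof.
move=> [d [g [Hg Hfin]]].
have [rho0 H0] := St_nonempty (tens O A A).
pose w0 : wit A := existT _ A (exist _ rho0 H0).
have [ws [Hsz Hws]] := @step _ _ _ _ _ g Hg d [:: w0] erefl (fun m M _ => rank_leq_col M).
exists (size ws), (fun i => projT1 (nth w0 ws i)),
  (fun i => proj1_sig (projT2 (nth w0 ws i))).
split => //; split; first by move=> i; exact: (proj2_sig (projT2 _)).
move=> T T' HT HT' Heq.
pose F := lincomb (fun k : 'I_2 => if val k == 0%N then 1 else -1)
  (fun k : 'I_2 => if val k == 0%N then T' else T).
have HF : TransfR F.
  exists 2%N, (fun k : 'I_2 => if val k == 0%N then 1 else -1),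
    (fun k : 'I_2 => if val k == 0%N then T' else T); split => // k.
  by case: (val k == 0%N).
have [c0 Hc0] := Hfin F HF.
have Hrow : (fun j => (\row_j0 c0 j0) 0 j) = c0.
  by apply: functional_extensionality => j; rewrite mxE.
have FE : forall E v, F E v = T' E v - T E v.
  by move=> E v; rewrite /F /lincomb big_ord_recl big_ord1 /= scale1r scaleN1r.
have HZ : Zset g (\row_j c0 j).
  apply: Hws => w /(In_nth_seq w0) [i [Hi <-]].
  rewrite /ev Hrow -Hc0 FE.
  by have := Heq (Ordinal Hi); rewrite /= => ->; rewrite subrr.
apply: functional_extensionality_dep => E; apply: functional_extensionality => v.
have := HZ E v; rewrite Hrow -Hc0 FE => /eqP; rewrite subr_eq0 => /eqP //.
Qed.
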